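(* Let $p>1$ and $x\in(0,1)$. The functions $k\mapsto(\arcsin_p(x^k))^{1/k}$ and $k\mapsto(\operatorname{artanh}_p(x^k))^{1/k}$ are decreasing on $(0,\infty)$, and the functions $k\mapsto(\arctan_p(x^k))^{1/k}$ and $k\mapsto(\operatorname{arsinh}_p(x^k))^{1/k}$ are increasing on $(0,\infty)$. In particular, for $k\ge1$, $$\sqrt[k]{\arcsin_p(x^k)}\le\arcsin_p(x)\le(\arcsin_p\sqrt[k]{x})^k,\qquad \sqrt[k]{\operatorname{artanh}_p(x^k)}\le\operatorname{artanh}_p(x)\le(\operatorname{artanh}_p\sqrt[k]{x})^k,$$ $$(\operatorname{arsinh}_p\sqrt[k]{x})^k\le\operatorname{arsinh}_p(x)\le\sqrt[k]{\operatorname{arsinh}_p(x^k)},\qquad (\arctan_p\sqrt[k]{x})^k\le\arctan_p(x)\le\sqrt[k]{\arctan_p(x^k)}.$$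
   Context: For $p>1$ and $y\in(0,1)$: $\arcsin_p y=\int_0^y(1-t^p)^{-1/p}dt$, $\arctan_p y=\int_0^y(1+t^p)^{-1}dt$, $\operatorname{arsinh}_p y=\int_0^y(1+t^p)^{-1/p}dt$, $\operatorname{artanh}_p y=\int_0^y(1-t^p)^{-1}dt$. *)

(* Defs.v *)
From Stdlib Require Import Reals.
From Coquelicot Require Import Coquelicot.
Open Scope R_scope.

(* Real power x^a for x > 0 (Stdlib's Rpower), extended by 0 for x <= 0,
   so that 0^p = 0 for the integrands below (irrelevant for the Riemann
   integral, but matches the usual convention). *)
Definition rpow (x a : R) : R :=
  if Rlt_dec 0 x then Rpower x a else 0.

Definition arcsin_p (p y : R) : R :=
  RInt (fun t => rpow (1 - rpow t p) (- / p)) 0 y.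
Definition arctan_p (p y : R) : R :=
  RInt (fun t => / (1 + rpow t p)) 0 y.
Definition arsinh_p (p y : R) : R :=
  RInt (fun t => rpow (1 + rpow t p) (- / p)) 0 y.
Definition artanh_p (p y : R) : R :=
  RInt (fun t => / (1 - rpow t p)) 0 y.

Definition root_comp (F : R -> R) (x k : R) : R := rpow (F (rpow x k)) (/ k).

Definition strictly_decreasing_pos (f : R -> R) : Prop :=
  forall k1 k2, 0 < k1 -> k1 < k2 -> f k2 < f k1.
Definition strictly_increasing_pos (f : R -> R) : Prop :=
  forall k1 k2, 0 < k1 -> k1 < k2 -> f k1 < f k2.

(* Main.v *)
Require Import Defs.
From Stdlib Require Import Reals Lra Psatz.
From Coquelicot Require Import Coquelicot.
Open Scope R_scope.

Lemma rpow_pos_eq u c : 0 < u -> rpow u c = exp (c * ln u).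
Proof. intros H. unfold rpow. destruct (Rlt_dec 0 u); [reflexivity|lra]. Qed.

Lemma rpow_nonpos u c : u <= 0 -> rpow u c = 0.
Proof. intros H. unfold rpow. destruct (Rlt_dec 0 u); [lra|reflexivity]. Qed.

Lemma ball_R (u e v : R) : ball u e v -> Rabs (v - u) < e.
Proof. intros H. exact H. Qed.

Lemma rpow_cont u c : 0 < u -> continuous (fun v => rpow v c) u.
Proof.
  intros Hu.
  apply continuous_ext_loc with (g := fun v => exp (c * ln v)).
  - assert (He : 0 < u / 2) by lra.
    exists (mkposreal _ He). intros v Hv. apply ball_R in Hv. simpl in Hv.
    apply Rabs_def2 in Hv. symmetry. apply rpow_pos_eq. lra.
  - apply continuous_exp_comp.
    apply (continuous_scal_r c ln u).
    now apply continuous_ln.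
Qed.

Lemma g_cont0 p : 1 < p -> continuous (fun t => rpow t p) 0.
Proof.
  intros Hp. apply continuity_pt_filterlim.
  intros eps Heps. exists (Rmin eps 1). split. { apply Rmin_pos; lra. }
  intros t [_ Ht]. simpl in *. unfold R_dist in *.
  rewrite (rpow_nonpos 0) by lra. rewrite Rminus_0_r in *.
  assert (Hm1 := Rmin_r eps 1). assert (Hm2 := Rmin_l eps 1).
  destruct (Rle_dec t 0).
  - rewrite rpow_nonpos by lra. rewrite Rabs_R0. lra.
  - rewrite rpow_pos_eq by lra.
    rewrite Rabs_pos_eq in Ht by lra. rewrite Rabs_pos_eq by (left; apply exp_pos).
    assert (ln t < 0). { rewrite <- ln_1. apply ln_increasing; lra. }
    assert (exp (p * ln t) < exp (ln t)) by (apply exp_increasing; nra).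
    rewrite exp_ln in H0 by lra. lra.
Qed.

Lemma g_cont p t : 1 < p -> 0 <= t -> continuous (fun t => rpow t p) t.
Proof.
  intros Hp [Ht|Ht]. now apply rpow_cont. subst. now apply g_cont0.
Qed.

Lemma g_bounds p t : 1 < p -> 0 <= t < 1 -> 0 <= rpow t p <= t.
Proof.
  intros Hp [[Ht|Ht] Ht1].
  - rewrite rpow_pos_eq by lra.
    assert (ln t < 0). { rewrite <- ln_1. apply ln_increasing; lra. }
    assert (exp (p * ln t) < exp (ln t)) by (apply exp_increasing; nra).
    rewrite exp_ln in H0 by lra. split; [left; apply exp_pos|lra].
  - subst. rewrite rpow_nonpos by lra. lra.
Qed.

Lemma g_mono p s t : 1 < p -> 0 <= s < t -> rpow s p < rpow t p.
Proof.
  intros Hp [[Hs|Hs] Hst].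
  - rewrite !rpow_pos_eq by lra. apply exp_increasing.
    assert (ln s < ln t) by (apply ln_increasing; lra). nra.
  - subst. rewrite rpow_nonpos by lra. rewrite rpow_pos_eq by lra. apply exp_pos.
Qed.

Lemma rpow_neg_mono c u v : c < 0 -> 0 < u < v -> rpow v c < rpow u c.
Proof.
  intros Hc [Hu Huv]. rewrite !rpow_pos_eq by lra. apply exp_increasing.
  assert (ln u < ln v) by (apply ln_increasing; lra). nra.
Qed.

Lemma rpow_neg_ge1 c u : c < 0 -> 0 < u <= 1 -> 1 <= rpow u c.
Proof.
  intros Hc [Hu Hu1]. rewrite rpow_pos_eq by lra.
  assert (ln u <= 0) by (rewrite <- ln_1; apply ln_le; lra).
  rewrite <- exp_0. destruct (Req_dec (c * ln u) 0) as [E|E].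
  - rewrite E; lra.
  - left. apply exp_increasing. nra.
Qed.

Lemma rpow_neg_le1 c u : c < 0 -> 1 <= u -> 0 < rpow u c <= 1.
Proof.
  intros Hc Hu. rewrite rpow_pos_eq by lra. split. apply exp_pos.
  assert (0 <= ln u) by (rewrite <- ln_1; apply ln_le; lra).
  rewrite <- exp_0. destruct (Req_dec (c * ln u) 0) as [E|E].
  - rewrite E; lra.
  - left. apply exp_increasing. nra.
Qed.

Lemma cont_csub (a : R) (f : R -> R) (x : R) : continuous f x -> continuous (fun t => a - f t) x.
Proof.
  intros H. eapply continuous_ext; [|apply (continuous_minus (fun _ => a) f x); [apply continuous_const|exact H]].
  intros t. reflexivity.
Qed.

Lemma cont_cadd (a : R) (f : R -> R) (x : R) : continuous f x -> continuous (fun t => a + f t) x.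
Proof.
  intros H. eapply continuous_ext; [|apply (continuous_plus (fun _ => a) f x); [apply continuous_const|exact H]].
  intros t. reflexivity.
Qed.

Section G.
Variable f : R -> R.
Hypothesis Hint : forall y, 0 < y < 1 -> ex_RInt f 0 y.

Lemma ex_sub a b : 0 <= a <= b -> b < 1 -> ex_RInt f a b.
Proof.
  intros Hab Hb. destruct (Req_dec b 0) as [E|E].
  - subst. assert (a = 0) by lra. subst. apply ex_RInt_point.
  - apply (@ex_RInt_Chasles_2 R_CompleteNormedModule f 0 a b). lra. apply Hint. lra.
Qed.

Lemma int_lb a b c : 0 <= a <= b -> b < 1 -> (forall t, a < t < b -> c <= f t) ->
  c * (b - a) <= RInt f a b.
Proof.
  intros Hab Hb H.
  replace (c * (b - a)) with (RInt (fun _ => c) a b).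
  - apply RInt_le. lra. apply ex_RInt_const. apply ex_sub; lra. exact H.
  - rewrite RInt_const. unfold scal; simpl; unfold mult; simpl. ring.
Qed.

Lemma int_ub a b c : 0 <= a <= b -> b < 1 -> (forall t, a < t < b -> f t <= c) ->
  RInt f a b <= c * (b - a).
Proof.
  intros Hab Hb H.
  replace (c * (b - a)) with (RInt (fun _ => c) a b).
  - apply RInt_le. lra. apply ex_sub; lra. apply ex_RInt_const. exact H.
  - rewrite RInt_const. unfold scal; simpl; unfold mult; simpl. ring.
Qed.

Lemma chasles3 a b c : 0 <= a <= b -> b <= c -> c < 1 ->
  RInt f a c = RInt f a b + RInt f b c.
Proof.
  intros. symmetry. apply (RInt_Chasles f a b c); apply ex_sub; lra.
Qed.

Lemma ratio_inc : (forall s t, 0 <= s -> s < t -> t < 1 -> f s < f t) ->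
  forall y1 y2, 0 < y1 -> y1 < y2 -> y2 < 1 ->
  y2 * RInt f 0 y1 < y1 * RInt f 0 y2.
Proof.
  intros Hm y1 y2 H1 H12 H2.
  set (m := (y1 + y2) / 2).
  assert (F1 : RInt f 0 y1 <= f y1 * (y1 - 0)).
  { apply int_ub; try lra. intros t Ht. left. apply Hm; lra. }
  assert (I1 : f y1 * (m - y1) <= RInt f y1 m).
  { apply int_lb; unfold m; try lra. intros t Ht. left. apply Hm; lra. }
  assert (I2 : f m * (y2 - m) <= RInt f m y2).
  { apply int_lb; unfold m; try lra. intros t Ht. left. apply Hm; unfold m in *; lra. }
  assert (Fm : f y1 < f m) by (apply Hm; unfold m; lra).
  rewrite (chasles3 0 y1 y2) by lra. rewrite (chasles3 y1 m y2) by (unfold m; lra).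
  assert (y1 * (f y1 * (y2 - m)) < y1 * (f m * (y2 - m))).
  { apply Rmult_lt_compat_l; [lra|]. apply Rmult_lt_compat_r; [unfold m; lra | exact Fm]. }
  assert (y1 * (f y1 * (m - y1)) <= y1 * RInt f y1 m) by (apply Rmult_le_compat_l; lra).
  assert (y1 * (f m * (y2 - m)) <= y1 * RInt f m y2) by (apply Rmult_le_compat_l; lra).
  assert ((y2 - y1) * RInt f 0 y1 <= (y2 - y1) * (f y1 * y1)) by (apply Rmult_le_compat_l; lra).
  clearbody m. nra.
Qed.

Lemma ratio_dec : (forall s t, 0 <= s -> s < t -> t < 1 -> f t < f s) ->
  forall y1 y2, 0 < y1 -> y1 < y2 -> y2 < 1 ->
  y1 * RInt f 0 y2 < y2 * RInt f 0 y1.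
Proof.
  intros Hm y1 y2 H1 H12 H2.
  set (m := (y1 + y2) / 2).
  assert (F1 : f y1 * (y1 - 0) <= RInt f 0 y1).
  { apply int_lb; try lra. intros t Ht. left. apply Hm; lra. }
  assert (I1 : RInt f y1 m <= f y1 * (m - y1)).
  { apply int_ub; unfold m; try lra. intros t Ht. left. apply Hm; lra. }
  assert (I2 : RInt f m y2 <= f m * (y2 - m)).
  { apply int_ub; unfold m; try lra. intros t Ht. left. apply Hm; unfold m in *; lra. }
  assert (Fm : f m < f y1) by (apply Hm; unfold m; lra).
  rewrite (chasles3 0 y1 y2) by lra. rewrite (chasles3 y1 m y2) by (unfold m; lra).
  assert (y1 * (f m * (y2 - m)) < y1 * (f y1 * (y2 - m))).
  { apply Rmult_lt_compat_l; [lra|]. apply Rmult_lt_compat_r; [unfold m; lra | exact Fm]. }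
  assert (y1 * RInt f y1 m <= y1 * (f y1 * (m - y1))) by (apply Rmult_le_compat_l; lra).
  assert (y1 * RInt f m y2 <= y1 * (f m * (y2 - m))) by (apply Rmult_le_compat_l; lra).
  assert ((y2 - y1) * (f y1 * y1) <= (y2 - y1) * RInt f 0 y1) by (apply Rmult_le_compat_l; lra).
  clearbody m. nra.
Qed.
End G.

Lemma xk_props x k : 0 < x < 1 -> 0 < k -> 0 < rpow x k < 1 /\ ln (rpow x k) = k * ln x.
Proof.
  intros Hx Hk. rewrite rpow_pos_eq by lra.
  assert (ln x < 0) by (rewrite <- ln_1; apply ln_increasing; lra).
  split; [split|]. apply exp_pos. rewrite <- exp_0. apply exp_increasing. nra.
  apply ln_exp.
Qed.

Lemma xk_lt x k1 k2 : 0 < x < 1 -> 0 < k1 -> k1 < k2 -> rpow x k2 < rpow x k1.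
Proof.
  intros Hx H1 H2. rewrite !rpow_pos_eq by lra.
  assert (ln x < 0) by (rewrite <- ln_1; apply ln_increasing; lra).
  apply exp_increasing. nra.
Qed.

Lemma key_dec (F : R -> R) x : 0 < x < 1 ->
  (forall y, 0 < y < 1 -> y <= F y) ->
  (forall y1 y2, 0 < y1 -> y1 < y2 -> y2 < 1 -> y2 * F y1 < y1 * F y2) ->
  strictly_decreasing_pos (root_comp F x).
Proof.
  intros Hx HF1 HF2 k1 k2 Hk1 Hk12. unfold root_comp.
  destruct (xk_props x k1 Hx Hk1) as [[Ha1 Ha2] La].
  destruct (xk_props x k2 Hx ltac:(lra)) as [[Hb1 Hb2] Lb].
  set (y2 := rpow x k1) in *. set (y1 := rpow x k2) in *.
  assert (Hy : y1 < y2) by (apply xk_lt; lra).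
  assert (P1 := HF1 y1 ltac:(lra)). assert (P2 := HF1 y2 ltac:(lra)).
  assert (Q := HF2 y1 y2 Hb1 Hy Ha2).
  rewrite !rpow_pos_eq by lra. apply exp_increasing.
  assert (Q' : ln (y2 * F y1) < ln (y1 * F y2)) by (apply ln_increasing; nra).
  rewrite !ln_mult in Q' by lra.
  assert (P1' : ln y1 <= ln (F y1)) by (apply ln_le; lra).
  rewrite La, Lb in *.
  set (L1 := ln (F y1)) in *. set (L2 := ln (F y2)) in *. set (lx := ln x) in *.
  assert (k1 * L1 < k2 * L2) by nra.
  apply (Rmult_lt_reg_l (k1 * k2)). nra.
  replace (k1 * k2 * (/ k2 * L1)) with (k1 * L1) by (field; lra).
  replace (k1 * k2 * (/ k1 * L2)) with (k2 * L2) by (field; lra). lra.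
Qed.

Lemma key_inc (F : R -> R) x : 0 < x < 1 ->
  (forall y, 0 < y < 1 -> 0 < F y <= y) ->
  (forall y1 y2, 0 < y1 -> y1 < y2 -> y2 < 1 -> y1 * F y2 < y2 * F y1) ->
  strictly_increasing_pos (root_comp F x).
Proof.
  intros Hx HF1 HF2 k1 k2 Hk1 Hk12. unfold root_comp.
  destruct (xk_props x k1 Hx Hk1) as [[Ha1 Ha2] La].
  destruct (xk_props x k2 Hx ltac:(lra)) as [[Hb1 Hb2] Lb].
  set (y2 := rpow x k1) in *. set (y1 := rpow x k2) in *.
  assert (Hy : y1 < y2) by (apply xk_lt; lra).
  assert (P1 := HF1 y1 ltac:(lra)). assert (P2 := HF1 y2 ltac:(lra)).
  assert (Q := HF2 y1 y2 Hb1 Hy Ha2).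
  rewrite !rpow_pos_eq by lra. apply exp_increasing.
  assert (Q' : ln (y1 * F y2) < ln (y2 * F y1)) by (apply ln_increasing; nra).
  rewrite !ln_mult in Q' by lra.
  assert (P1' : ln (F y1) <= ln y1) by (apply ln_le; lra).
  rewrite La, Lb in *.
  set (L1 := ln (F y1)) in *. set (L2 := ln (F y2)) in *. set (lx := ln x) in *.
  assert (k2 * L2 < k1 * L1) by nra.
  apply (Rmult_lt_reg_l (k1 * k2)). nra.
  replace (k1 * k2 * (/ k2 * L1)) with (k1 * L1) by (field; lra).
  replace (k1 * k2 * (/ k1 * L2)) with (k2 * L2) by (field; lra). lra.
Qed.

Lemma rpow_1 u : 0 < u -> rpow u 1 = u.
Proof. intros. rewrite rpow_pos_eq by lra. rewrite Rmult_1_l. apply exp_ln; lra. Qed.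

Lemma root1 F x : 0 < x < 1 -> 0 < F x -> root_comp F x 1 = F x.
Proof. intros. unfold root_comp. rewrite Rinv_1, (rpow_1 x), rpow_1; lra. Qed.

Lemma rootinv F x k : 0 < k -> root_comp F x (/ k) = rpow (F (rpow x (/ k))) k.
Proof. intros. unfold root_comp. rewrite Rinv_inv. reflexivity. Qed.

Lemma part_dec F x : 0 < x < 1 -> 0 < F x -> strictly_decreasing_pos (root_comp F x) ->
  forall k, 1 <= k -> rpow (F (rpow x k)) (/ k) <= F x /\ F x <= rpow (F (rpow x (/ k))) k.
Proof.
  intros Hx HF H k Hk. rewrite <- (root1 F x) by lra. rewrite <- rootinv by lra.
  change (rpow (F (rpow x k)) (/ k)) with (root_comp F x k).
  destruct Hk as [Hk|Hk].
  - split; left; apply H; try lra.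
    + apply Rinv_0_lt_compat; lra.
    + rewrite <- Rinv_1. apply Rinv_lt_contravar; lra.
  - subst. rewrite Rinv_1. lra.
Qed.

Lemma part_inc F x : 0 < x < 1 -> 0 < F x -> strictly_increasing_pos (root_comp F x) ->
  forall k, 1 <= k -> rpow (F (rpow x (/ k))) k <= F x /\ F x <= rpow (F (rpow x k)) (/ k).
Proof.
  intros Hx HF H k Hk. rewrite <- (root1 F x) by lra. rewrite <- rootinv by lra.
  change (rpow (F (rpow x k)) (/ k)) with (root_comp F x k).
  destruct Hk as [Hk|Hk].
  - split; left; apply H; try lra.
    + apply Rinv_0_lt_compat; lra.
    + rewrite <- Rinv_1. apply Rinv_lt_contravar; lra.
  - subst. rewrite Rinv_1. lra.
Qed.

Lemma hint_of_cont (f : R -> R) : (forall z, 0 <= z < 1 -> continuous f z) ->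
  forall y, 0 < y < 1 -> ex_RInt f 0 y.
Proof.
  intros H y Hy. apply (@ex_RInt_continuous R_CompleteNormedModule).
  rewrite Rmin_left, Rmax_right by lra. intros z Hz. apply H. lra.
Qed.

Lemma fam_dec (F f : R -> R) x : 0 < x < 1 ->
  (forall y, F y = RInt f 0 y) ->
  (forall z, 0 <= z < 1 -> continuous f z) ->
  (forall s t, 0 <= s -> s < t -> t < 1 -> f s < f t) ->
  (forall t, 0 <= t < 1 -> 1 <= f t) ->
  strictly_decreasing_pos (root_comp F x) /\
  (forall k, 1 <= k -> rpow (F (rpow x k)) (/ k) <= F x /\ F x <= rpow (F (rpow x (/ k))) k).
Proof.
  intros Hx HF Hc Hm Hb. assert (Hint := hint_of_cont f Hc).
  assert (Hlb : forall y, 0 < y < 1 -> y <= F y).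
  { intros y Hy. rewrite HF. replace y with (1 * (y - 0)) at 1 by ring.
    apply int_lb; try easy; try lra. intros t Ht. apply Hb. lra. }
  assert (Hd : strictly_decreasing_pos (root_comp F x)).
  { apply key_dec; try easy. intros y1 y2 H1 H2 H3. rewrite !HF.
    apply ratio_inc; easy. }
  split; [easy|]. apply part_dec; try easy. specialize (Hlb x Hx). lra.
Qed.

Lemma fam_inc (F f : R -> R) x : 0 < x < 1 ->
  (forall y, F y = RInt f 0 y) ->
  (forall z, 0 <= z < 1 -> continuous f z) ->
  (forall s t, 0 <= s -> s < t -> t < 1 -> f t < f s) ->
  (forall t, 0 <= t < 1 -> 0 < f t <= 1) ->
  strictly_increasing_pos (root_comp F x) /\
  (forall k, 1 <= k -> rpow (F (rpow x (/ k))) k <= F x /\ F x <= rpow (F (rpow x k)) (/ k)).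
Proof.
  intros Hx HF Hc Hm Hb. assert (Hint := hint_of_cont f Hc).
  assert (Hlb : forall y, 0 < y < 1 -> 0 < F y <= y).
  { intros y Hy. rewrite HF. split.
    - assert (f y * (y - 0) <= RInt f 0 y).
      { apply int_lb; try easy; try lra. intros t Ht. left. apply Hm; lra. }
      assert (0 < f y) by (apply Hb; lra). nra.
    - replace y with (1 * (y - 0)) at 2 by ring.
      apply int_ub; try easy; try lra. intros t Ht. apply Hb. lra. }
  assert (Hd : strictly_increasing_pos (root_comp F x)).
  { apply key_inc; try easy. intros y1 y2 H1 H2 H3. rewrite !HF.
    apply ratio_dec; easy. }
  split; [easy|]. apply part_inc; try easy. apply Hlb; easy.
Qed.

Section P.
Variable p : R.
Hypothesis hp : 1 < p.

Lemma cneg : - / p < 0.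
Proof. assert (0 < / p) by (apply Rinv_0_lt_compat; lra). lra. Qed.

Lemma cont_sub z : 0 <= z < 1 -> continuous (fun t => 1 - rpow t p) z.
Proof. intros. apply cont_csub. apply g_cont; lra. Qed.
Lemma cont_add z : 0 <= z < 1 -> continuous (fun t => 1 + rpow t p) z.
Proof. intros. apply cont_cadd. apply g_cont; lra. Qed.

Lemma i_asin : forall x, 0 < x < 1 ->
  strictly_decreasing_pos (root_comp (arcsin_p p) x) /\
  (forall k, 1 <= k -> rpow (arcsin_p p (rpow x k)) (/ k) <= arcsin_p p x /\
     arcsin_p p x <= rpow (arcsin_p p (rpow x (/ k))) k).
Proof.
  intros x Hx. apply fam_dec with (f := fun t => rpow (1 - rpow t p) (- / p)); try easy.
  - intros z Hz. apply (continuous_comp (fun t => 1 - rpow t p) (fun u => rpow u (- / p))).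
    apply cont_sub; easy. apply rpow_cont. assert (H := g_bounds p z hp Hz). lra.
  - intros s t H1 H2 H3. assert (A1 := g_bounds p s hp ltac:(lra)).
    assert (A2 := g_bounds p t hp ltac:(lra)). assert (M := g_mono p s t hp ltac:(lra)).
    apply rpow_neg_mono. apply cneg. lra.
  - intros t Ht. assert (A := g_bounds p t hp Ht). apply rpow_neg_ge1. apply cneg. lra.
Qed.

Lemma i_atanh : forall x, 0 < x < 1 ->
  strictly_decreasing_pos (root_comp (artanh_p p) x) /\
  (forall k, 1 <= k -> rpow (artanh_p p (rpow x k)) (/ k) <= artanh_p p x /\
     artanh_p p x <= rpow (artanh_p p (rpow x (/ k))) k).
Proof.
  intros x Hx. apply fam_dec with (f := fun t => / (1 - rpow t p)); try easy.
  - intros z Hz. apply (continuous_Rinv_comp (fun t => 1 - rpow t p)).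
    apply cont_sub; easy. assert (H := g_bounds p z hp Hz). lra.
  - intros s t H1 H2 H3. assert (A1 := g_bounds p s hp ltac:(lra)).
    assert (A2 := g_bounds p t hp ltac:(lra)). assert (M := g_mono p s t hp ltac:(lra)).
    apply Rinv_lt_contravar; nra.
  - intros t Ht. assert (A := g_bounds p t hp Ht). rewrite <- Rinv_1 at 1.
    apply Rinv_le_contravar; lra.
Qed.

Lemma i_atan : forall x, 0 < x < 1 ->
  strictly_increasing_pos (root_comp (arctan_p p) x) /\
  (forall k, 1 <= k -> rpow (arctan_p p (rpow x (/ k))) k <= arctan_p p x /\
     arctan_p p x <= rpow (arctan_p p (rpow x k)) (/ k)).
Proof.
  intros x Hx. apply fam_inc with (f := fun t => / (1 + rpow t p)); try easy.
  - intros z Hz. apply (continuous_Rinv_comp (fun t => 1 + rpow t p)).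
    apply cont_add; easy. assert (H := g_bounds p z hp Hz). lra.
  - intros s t H1 H2 H3. assert (A1 := g_bounds p s hp ltac:(lra)).
    assert (A2 := g_bounds p t hp ltac:(lra)). assert (M := g_mono p s t hp ltac:(lra)).
    apply Rinv_lt_contravar; nra.
  - intros t Ht. assert (A := g_bounds p t hp Ht). split.
    apply Rinv_0_lt_compat; lra. rewrite <- Rinv_1 at 2.
    apply Rinv_le_contravar; lra.
Qed.

Lemma i_asinh : forall x, 0 < x < 1 ->
  strictly_increasing_pos (root_comp (arsinh_p p) x) /\
  (forall k, 1 <= k -> rpow (arsinh_p p (rpow x (/ k))) k <= arsinh_p p x /\
     arsinh_p p x <= rpow (arsinh_p p (rpow x k)) (/ k)).
Proof.
  intros x Hx. apply fam_inc with (f := fun t => rpow (1 + rpow t p) (- / p)); try easy.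
  - intros z Hz. apply (continuous_comp (fun t => 1 + rpow t p) (fun u => rpow u (- / p))).
    apply cont_add; easy. apply rpow_cont. assert (H := g_bounds p z hp Hz). lra.
  - intros s t H1 H2 H3. assert (A1 := g_bounds p s hp ltac:(lra)).
    assert (A2 := g_bounds p t hp ltac:(lra)). assert (M := g_mono p s t hp ltac:(lra)).
    apply rpow_neg_mono. apply cneg. lra.
  - intros t Ht. assert (A := g_bounds p t hp Ht). apply rpow_neg_le1. apply cneg. lra.
Qed.
End P.

Theorem lemma2p4 (p x : R) (hp : 1 < p) (hx0 : 0 < x) (hx1 : x < 1) :
  strictly_decreasing_pos (root_comp (arcsin_p p) x) /\
  strictly_decreasing_pos (root_comp (artanh_p p) x) /\
  strictly_increasing_pos (root_comp (arctan_p p) x) /\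
  strictly_increasing_pos (root_comp (arsinh_p p) x) /\
  (forall k, 1 <= k ->
     (rpow (arcsin_p p (rpow x k)) (/ k) <= arcsin_p p x
        /\ arcsin_p p x <= rpow (arcsin_p p (rpow x (/ k))) k) /\
     (rpow (artanh_p p (rpow x k)) (/ k) <= artanh_p p x
        /\ artanh_p p x <= rpow (artanh_p p (rpow x (/ k))) k) /\
     (rpow (arsinh_p p (rpow x (/ k))) k <= arsinh_p p x
        /\ arsinh_p p x <= rpow (arsinh_p p (rpow x k)) (/ k)) /\
     (rpow (arctan_p p (rpow x (/ k))) k <= arctan_p p x
        /\ arctan_p p x <= rpow (arctan_p p (rpow x k)) (/ k))).
Proof.
  assert (Hx : 0 < x < 1) by lra.
  destruct (i_asin p hp x Hx) as [A1 A2].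
  destruct (i_atanh p hp x Hx) as [B1 B2].
  destruct (i_atan p hp x Hx) as [C1 C2].
  destruct (i_asinh p hp x Hx) as [D1 D2].
  split; [easy|]. split; [easy|]. split; [easy|]. split; [easy|].
  intros k Hk. split; [apply A2; easy|]. split; [apply B2; easy|].
  split; [apply D2; easy|]. apply C2; easy.
Qed.
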